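(* Let $G$ be a graph of order $p$ with $1\le\delta(G)\le p-2$. If $G$ has a $d$-sequence $\{\mathcal G_i\}_{i=1}^s$ such that $z_i(G)\ge 0$ for all $2\le i\le s$, then $str(G)\le p+d_G$. Moreover, equality holds if $d_G=\delta(G)$.
   Context: For a graph $G$ of order $p$, a numbering of $G$ is a bijection $f:V(G)\to[1,p]$ ($[a,b]$ is the set of integers from $a$ to $b$). The strength of a numbering $f$ is $str_f(G)=\max\{f(u)+f(v): uv\in E(G)\}$, and $str(G)=\min\{str_f(G): f \text{ a numbering of } G\}$. $\delta(G)$ denotes the minimum degree; $G+H$ denotes disjoint union; $mK_1$ is the edgeless graph on $m$ vertices; $K_r$ the complete graph. $d$-sequence: Let $G$ have order $p$ with $1\le\delta(G)\le p-2$. Set $\mathcal G_1=G_1=G$, $m_1=0$. For each $i$, write $\mathcal G_i=m_iK_1+G_i$, where $m_i\ge0$ is the number of isolated vertices of $\mathcal G_i$ and $G_i$ has no isolated vertices. If $\mathcal G_i$ is neither of the form $mK_1$ ($m\ge1$) nor $mK_1+K_r$ ($m\ge0$, $r\ge2$), choose any vertex $u_i$ of $G_i$, put $d_i=\deg_{G_i}(u_i)$, and let $\mathcal G_{i+1}$ be obtained from $G_i$ by deleting $u_i$ together with all its neighbours in $G_i$. Stop at the first index $s$ ($s\ge 2$) for which $\mathcal G_s$ is $m_sK_1$ with $m_s\ge1$ (then set $d_s=0$) or $m_sK_1+K_r$ with $m_s\ge0$, $r\ge2$ (then $d_s=r-1$). The sequence $\{\mathcal G_i\}_{i=1}^s$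 is a $d$-sequence of $G$. Write $d_G=d_1$, $y_j(G)=m_j+1-d_j$ and $z_i(G)=\sum_{j=2}^i y_j(G)$ for $2\le i\le s$. *)

(* Defs.v *)
(* A graph is a symmetric irreflexive relation e on a finType T;
   its order is p = #|T|. *)
From mathcomp Require Import all_boot all_order all_algebra.
Set Implicit Arguments. Unset Strict Implicit. Unset Printing Implicit Defensive.
Import GRing.Theory Num.Theory.

Section Graph.
Variable T : finType.
Variable e : rel T.

Definition simple_graph := symmetric e /\ irreflexive e.

(* A numbering f : V -> [1,p] is encoded as an injective (hence bijective)
   finite function f : V -> 'I_p ; the number of vertex v is (f v).+1. *)
Definition is_numbering (f : {ffun T -> 'I_#|T|}) : bool := injectiveb f.

(* str_f(G) = max { f(u) + f(v) : uv in E(G) }  (0 if no edge). *)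
Definition strength_of (f : {ffun T -> 'I_#|T|}) : nat :=
  \max_(u : T) \max_(v : T | e u v) ((f u).+1 + (f v).+1).

Definition str_pred : pred nat :=
  fun n => [exists f : {ffun T -> 'I_#|T|}, is_numbering f && (strength_of f == n)].

Lemma str_exists : exists n, str_pred n.
Proof.
exists (strength_of [ffun x => enum_rank x]).
apply/existsP; exists [ffun x => enum_rank x]; rewrite eqxx andbT.
apply/injectiveP => x y; rewrite !ffunE; exact: enum_rank_inj.
Qed.

Definition str : nat := ex_minn str_exists.

Definition deg_in (S : {set T}) (u : T) : nat := #|[set w in S | e u w]|.

Definition min_degree : nat := \big[minn/#|T|]_(v : T) deg_in setT v.

(* ---------- d-sequences ----------
   A graph script{G}_i is represented by its vertex set S (induced subgraph
   G[S]). *)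
Definition iso (S : {set T}) : {set T} := [set v in S | [forall w in S, ~~ e v w]].
(* vertex set of G_i : G[S] minus its isolated vertices *)
Definition core (S : {set T}) : {set T} := S :\: iso S.
Definition miso (S : {set T}) : nat := #|iso S|.
Definition dcore (S : {set T}) (u : T) : nat := deg_in (core S) u.
Definition dnext (S : {set T}) (u : T) : {set T} :=
  core S :\: (u |: [set w in core S | e u w]).

(* script{G} = m K_1 with m >= 1 *)
Definition is_mK1 (S : {set T}) : bool := (0 < #|S|) && (core S == set0).
(* script{G} = m K_1 + K_r with m >= 0, r >= 2 *)
Definition is_mK1Kr (S : {set T}) : bool :=
  (2 <= #|core S|) &&
  [forall v in core S, forall w in core S, (v != w) ==> e v w].
Definition terminal (S : {set T}) : bool := is_mK1 S || is_mK1Kr S.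
Definition dterm (S : {set T}) : nat := if is_mK1 S then 0 else #|core S| - 1.

(* A d-sequence is determined by the chosen vertices us = [u_1; ...; u_{s-1}].
   dstates us = [script{G}_1; ...; script{G}_s], script{G}_1 = G. *)
Definition dstates (us : seq T) : seq {set T} := setT :: scanl dnext setT us.

Definition is_dseq (us : seq T) : bool :=
  all (fun p => ~~ terminal p.1 && (p.2 \in core p.1)) (zip (dstates us) us) &&
  terminal (last setT (dstates us)).

(* s = size (dstates us) = size us + 1 *)
Definition dlen (us : seq T) : nat := size (dstates us).
Definition dlist (us : seq T) : seq nat :=
  [seq dcore p.1 p.2 | p <- zip (dstates us) us] ++
  [:: dterm (last setT (dstates us))].
Definition mlist (us : seq T) : seq nat := [seq miso X | X <- dstates us].

(* 1-indexed d_j, m_j, y_j, z_i *)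
Definition d_ (us : seq T) (j : nat) : nat := nth 0 (dlist us) j.-1.
Definition m_ (us : seq T) (j : nat) : nat := nth 0 (mlist us) j.-1.
Definition y_ (us : seq T) (j : nat) : int := ((m_ us j)%:Z + 1 - (d_ us j)%:Z)%R.
Definition z_ (us : seq T) (i : nat) : int := (\sum_(2 <= j < i.+1) y_ us j)%R.
Definition d_G (us : seq T) : nat := d_ us 1.
End Graph.

(* Main.v *)
Require Import Defs.
From mathcomp Require Import all_boot all_order all_algebra.
From mathcomp Require Import zify.
Import GRing.Theory Num.Theory.
Set Implicit Arguments. Unset Strict Implicit. Unset Printing Implicit Defensive.

Section Proof.
Variable T : finType.
Variable e : rel T.
Hypothesis esym : symmetric e.
Hypothesis eirr : irreflexive e.

Definition lab (A : {set T}) (lo : nat) (g : T -> nat) :=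
  {in A &, injective g} /\ forall v, v \in A -> lo < g v <= lo + #|A|.

Lemma lab_enum (A : {set T}) lo : exists g, lab A lo g.
Proof.
exists (fun v => lo + (index v (enum A)).+1); split.
- move=> x y xA yA /= /eqP; rewrite eqn_add2l eqSS => /eqP H.
  have xA' : x \in enum A by rewrite mem_enum.
  have yA' : y \in enum A by rewrite mem_enum.
  by rewrite -(nth_index x xA') H (nth_index x yA').
- move=> v vA; rewrite cardE.
  have : index v (enum A) < size (enum A) by rewrite index_mem mem_enum.
  lia.
Qed.

Lemma cardsU_disj (A C : {set T}) : (forall v, v \in A -> v \notin C) ->
  #|A :|: C| = #|A| + #|C|.
Proof.
move=> dAC; rewrite cardsU.
have -> : A :&: C = set0.
  apply/setP => v; rewrite !inE; apply/negP => /andP[vA vC].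
  by move: (dAC v vA); rewrite vC.
by rewrite cards0 subn0.
Qed.

Lemma lab_glue (A C : {set T}) lo (gA gC : T -> nat) : (forall v, v \in A -> v \notin C) ->
  lab A lo gA -> lab C (lo + #|A|) gC ->
  lab (A :|: C) lo (fun v => if v \in A then gA v else gC v).
Proof.
move=> dAC [iA rA] [iC rC].
have cU := cardsU_disj dAC.
have nAC : forall v, v \in C -> v \notin A.
  by move=> v vC; apply/negP => vA; move: (dAC v vA); rewrite vC.
split.
- move=> x y; rewrite !inE => /orP[xA|xC] /orP[yA|yC] /=.
  + rewrite xA yA; exact: iA.
  + rewrite xA (negbTE (nAC _ yC)) => H.
    move: (rA _ xA) (rC _ yC) => /andP[? ?] /andP[? ?]; lia.
  + rewrite yA (negbTE (nAC _ xC)) => H.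
    move: (rA _ yA) (rC _ xC) => /andP[? ?] /andP[? ?]; lia.
  + rewrite (negbTE (nAC _ xC)) (negbTE (nAC _ yC)); exact: iC.
- move=> v; rewrite inE cU => /orP[vA|vC].
  + by rewrite vA; move: (rA _ vA) => /andP[? ?]; lia.
  + by rewrite (negbTE (nAC _ vC)); move: (rC _ vC) => /andP[? ?]; lia.
Qed.

Lemma lab_set1 u lo : lab [set u] lo (fun _ => lo.+1).
Proof.
split.
- by move=> x y; rewrite !inE => /eqP -> /eqP ->.
- by move=> v _; rewrite cards1; lia.
Qed.

Lemma iso_sub (S : {set T}) v : v \in iso e S -> v \in S.
Proof. by rewrite inE => /andP[]. Qed.

Lemma iso_noedge (S : {set T}) v w : v \in iso e S -> w \in S -> e v w = false.
Proof.
rewrite inE => /andP[_ /forallP H] wS.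
by apply/negbTE; move: (H w); rewrite wS.
Qed.

Lemma in_core (S : {set T}) v : (v \in core e S) = (v \notin iso e S) && (v \in S).
Proof. by rewrite /core in_setD. Qed.

Lemma edge_core (S : {set T}) v w : v \in S -> w \in S -> e v w -> v \in core e S.
Proof.
move=> vS wS evw; rewrite in_core vS andbT; apply/negP => vi.
by rewrite (iso_noedge vi wS) in evw.
Qed.

Lemma card_core (S : {set T}) : #|S| = #|iso e S| + #|core e S|.
Proof.
rewrite -(cardsID (iso e S) S).
have -> : S :&: iso e S = iso e S.
  by apply/setIidPr; apply/subsetP => v; exact: iso_sub.
by [].
Qed.

Definition Nb S u := [set w in core e S | e u w].

Lemma in_dnext (S : {set T}) u v : (v \in dnext e S u) =
  [&& v != u, v \notin Nb S u & v \in core e S].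
Proof. by rewrite /dnext in_setD in_setU1 negb_or andbA. Qed.

Lemma in_Nb S u v : (v \in Nb S u) = (v \in core e S) && e u v.
Proof. by rewrite inE. Qed.

Lemma decomp (S : {set T}) u : u \in core e S ->
  S = Nb S u :|: (dnext e S u :|: ([set u] :|: iso e S)).
Proof.
move=> uc; apply/setP => v; rewrite !in_setU in_set1 in_dnext in_Nb in_core.
move: uc; rewrite in_core => /andP[ui uS].
case: (eqVneq v u) => [->|vu]; first by rewrite ui uS /= !orbT.
have := @iso_sub S v.
by case: (v \in iso e S); case: (v \in S); case: (e u v) => // /(_ isT).
Qed.

Lemma disj1 (S : {set T}) u v : u \in core e S -> v \in [set u] -> v \notin iso e S.
Proof. by move=> uc; rewrite in_set1 => /eqP ->; move: uc; rewrite in_core => /andP[]. Qed.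

Lemma disj2 (S : {set T}) u v : v \in dnext e S u -> v \notin [set u] :|: iso e S.
Proof.
rewrite in_dnext in_setU in_set1 in_core => /and3P[vu _ /andP[vi _]].
by rewrite negb_or vu vi.
Qed.

Lemma disj3 (S : {set T}) u v : v \in Nb S u -> v \notin dnext e S u :|: ([set u] :|: iso e S).
Proof.
move=> vN; move: (vN); rewrite in_Nb in_core => /andP[/andP[vi _] euv].
have vu : v != u by apply/eqP => vu; rewrite vu eirr in euv.
by rewrite !in_setU in_set1 in_dnext vN (negbTE vu) (negbTE vi).
Qed.

Fixpoint Cond (S : {set T}) (us : seq T) (lo B : nat) : Prop :=
  match us with
  | [::] => core e S = set0 \/ 2 * lo + 2 * #|core e S| <= B.+1
  | u :: us' => u \in core e S /\ 2 * lo + 2 * dcore e S u + #|dnext e S u| + 1 <= B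
                /\ Cond (dnext e S u) us' (lo + dcore e S u) B
  end.

Lemma label us : forall S lo B, Cond S us lo B -> exists g, lab S lo g /\
  (forall v w, v \in S -> w \in S -> e v w -> g v + g w <= B).
Proof.
elim: us => [|u us IH] S lo B /=.
- move=> HC.
  have [gC hC] := lab_enum (core e S) lo.
  have [gI hI] := lab_enum (iso e S) (lo + #|core e S|).
  have d : forall v, v \in core e S -> v \notin iso e S.
    by move=> v; rewrite in_core => /andP[].
  have hL := lab_glue d hC hI.
  have eqS : core e S :|: iso e S = S.
    apply/setP => v; rewrite in_setU in_core.
    by have := @iso_sub S v; case: (v \in iso e S); case: (v \in S) => // /(_ isT).
  rewrite eqS in hL.
  exists (fun v => if v \in core e S then gC v else gI v); split => //.
  move=> v w vS wS evw.
  have vc := edge_core vS wS evw.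
  have wc : w \in core e S by apply: (edge_core wS vS); rewrite esym.
  rewrite vc wc.
  case: HC => [c0|HB]; first by rewrite c0 inE in vc.
  have vw : v != w by apply/eqP => vw; rewrite vw eirr in evw.
  case: hC => iC rC.
  have ne : gC v != gC w by apply/eqP => /(iC _ _ vc wc) /eqP; rewrite (negbTE vw).
  move: (rC _ vc) (rC _ wc) ne => /andP[? ?] /andP[? ?] /eqP ?; lia.
- move=> [uc [HB HC]].
  have [g' [hg' eg']] := IH _ _ _ HC.
  have dN : dcore e S u = #|Nb S u| by [].
  rewrite dN in hg' HB.
  set N := Nb S u in hg' HB *. set S' := dnext e S u in hg' eg' HB *.
  have [gN hN] := lab_enum N lo.
  have [gI hI] := lab_enum (iso e S) (lo + #|N| + #|S'| + #|[set u]|).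
  have h1 := lab_glue (fun v => @disj1 S u v uc) (lab_set1 u (lo + #|N| + #|S'|)) hI.
  have h2 := lab_glue (fun v => @disj2 S u v) hg' h1.
  have h3 := lab_glue (fun v => @disj3 S u v) hN h2.
  rewrite -(decomp uc) in h3.
  eexists; split; first exact: h3.
  have bnd : forall w, w \in core e S -> w \notin N ->
     (if w \in S' then g' w else
        if w \in [set u] then (lo + #|N| + #|S'|).+1 else gI w) <= lo + #|N| + #|S'| + 1.
    move=> w wc wN.
    case wS': (w \in S').
      by case: hg' => _ /(_ _ wS') /andP[? ?]; lia.
    have -> : w \in [set u].
      by move: wS'; rewrite in_dnext wc (negbTE wN) andbT inE; case: eqP.
    lia.
  have bndN : forall w, w \in N -> gN w <= lo + #|N|.
    by move=> w wN; case: hN => _ /(_ _ wN) /andP[? ?].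
  move=> v w vS wS evw /=; rewrite -/S'.
  have vc := edge_core vS wS evw.
  have wc : w \in core e S by apply: (edge_core wS vS); rewrite esym.
  have cN : forall x, x \in core e S -> x \in N -> x \in core e S -> True by [].
  case vN: (v \in N); case wN: (w \in N).
  + move: (bndN _ vN) (bndN _ wN); lia.
  + move: (bndN _ vN) (bnd _ wc (negbT wN)); lia.
  + move: (bndN _ wN) (bnd _ vc (negbT vN)); lia.
  + have vu : v != u.
      apply/eqP => vu; subst v.
      by move: wN; rewrite /N in_Nb wc evw.
    have wu : w != u.
      apply/eqP => wu; subst w.
      by move: vN; rewrite /N in_Nb vc esym evw.
    have vS' : v \in S' by rewrite /S' in_dnext vu vN vc.
    have wS' : w \in S' by rewrite /S' in_dnext wu wN wc.
    rewrite vS' wS'; exact: eg'.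
Qed.


Definition states (S : {set T}) (us : seq T) := S :: scanl (dnext e) S us.
Definition dlistS S us := [seq dcore e p.1 p.2 | p <- zip (states S us) us] ++
  [:: dterm e (last S (states S us))].
Definition mlistS S us := [seq miso e X | X <- states S us].
Definition yl S us (j : nat) : int :=
  ((nth 0 (mlistS S us) j)%:Z + 1 - (nth 0 (dlistS S us) j)%:Z)%R.

Fixpoint Valid (S : {set T}) (us : seq T) : bool :=
  match us with
  | [::] => terminal e S
  | u :: us' => (u \in core e S) && Valid (dnext e S u) us'
  end.

Lemma valid_of us : forall S,
  all (fun p => ~~ terminal e p.1 && (p.2 \in core e p.1)) (zip (states S us) us) &&
  terminal e (last S (states S us)) -> Valid S us.
Proof.
elim: us => [|u us IH] S; first by move=> /andP[].
move=> /andP[/= /andP[/andP[_ uc] H1] H2].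
by rewrite uc; apply: IH; rewrite H1 H2.
Qed.

Lemma yl_cons S u us j : yl S (u :: us) j.+1 = yl (dnext e S u) us j.
Proof. by []. Qed.

Lemma yl_cons0 S u us : yl S (u :: us) 0 = ((miso e S)%:Z + 1 - (dcore e S u)%:Z)%R.
Proof. by []. Qed.

Lemma yl_nil0 S : yl S [::] 0 = ((miso e S)%:Z + 1 - (dterm e S)%:Z)%R.
Proof. by []. Qed.

Lemma card_step S u : u \in core e S ->
  #|S| = #|Nb S u| + #|dnext e S u| + 1 + miso e S.
Proof.
move=> uc; rewrite {1}(decomp uc).
rewrite (cardsU_disj (fun v => @disj3 S u v)) (cardsU_disj (fun v => @disj2 S u v)).
rewrite (cardsU_disj (fun v => @disj1 S u v uc)) cards1 /miso; lia.
Qed.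

Lemma arith us : forall S lo B, Valid S us ->
  (forall k, 0 < k <= (size us).+1 ->
     (1 <= B%:Z - (2 * lo + #|S|)%N%:Z + \sum_(0 <= j < k) yl S us j)%R) ->
  Cond S us lo B.
Proof.
elim: us => [|u us IH] S lo B /=.
- move=> Ht H; move: (H 1 isT); rewrite big_nat1 yl_nil0 => H1.
  move: Ht; rewrite /terminal => /orP[Hm|Hk].
    by left; move: Hm => /andP[_ /eqP].
  right.
  have cS := card_core S.
  have Hd : dterm e S = #|core e S| - 1.
    rewrite /dterm; case: ifP => // /andP[_ /eqP c0].
    by move: Hk; rewrite /is_mK1Kr c0 cards0.
  move: Hk => /andP[c2 _].
  rewrite Hd /miso in H1; lia.
- move=> /andP[uc V] H.
  have cS := card_step uc.
  move: (H 1 isT); rewrite big_nat1 yl_cons0 => H1.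
  have dN : dcore e S u = #|Nb S u| by [].
  rewrite dN in H1 *.
  split => //; split; first by lia.
  apply: IH => // k /andP[k0 kl].
  have hk : 0 < k.+1 <= (size (u :: us)).+1 by rewrite /= ltnS kl.
  move: (H k.+1 hk).
  rewrite big_nat_recl // yl_cons0.
  under eq_bigr do rewrite yl_cons.
  rewrite dN; lia.
Qed.

End Proof.

Theorem mainTheorem5 (T : finType) (e : rel T) :
  simple_graph e ->
  1 <= min_degree e <= #|T| - 2 ->
  forall us : seq T,
    is_dseq e us ->
    (forall i, 2 <= i <= dlen e us -> (0 <= z_ e us i)%R) ->
    str e <= #|T| + d_G e us /\
    (d_G e us = min_degree e -> str e = #|T| + d_G e us).
Proof.
move=> [esym eirr] /andP[d1 dp] us vus hz.
have V : Valid e setT us by apply: valid_of; exact: vus.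
have deg : forall v, min_degree e <= deg_in e setT v.
  move=> v; rewrite /min_degree.
  have : v \in index_enum T by rewrite mem_index_enum.
  elim: (index_enum T) => [//|a r IHr]; rewrite inE big_cons => /orP[/eqP <-|vr] /=.
    exact: geq_minl.
  exact: leq_trans (geq_minr _ _) (IHr vr).
have m0 : miso e setT = 0.
  rewrite /miso; apply/eqP; rewrite cards_eq0; apply/eqP/setP => v.
  rewrite /iso !inE /=.
  have : 0 < deg_in e setT v by apply: leq_trans d1 (deg v).
  rewrite card_gt0 => /set0Pn [w]; rewrite inE /= => /andP[_ evw].
  by apply/negbTE/negP => /forallP /(_ w); rewrite in_setT evw.
have C : Cond e setT us 0 (#|T| + d_G e us).
  apply: arith => // k /andP[k0 kl].
  rewrite big_ltn //.
  have yl0 : yl e setT us 0 = ((miso e setT)%:Z + 1 - (d_G e us)%:Z)%R by [].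
  rewrite yl0 m0 cardsT.
  case: (ltnP 1 k) => k1.
  - have hk : 2 <= k <= dlen e us by rewrite k1 /dlen /dstates /= size_scanl.
    have hzk := hz k hk.
    rewrite /z_ big_add1 /= in hzk.
    have E : (\sum_(1 <= i < k) y_ e us i.+1 = \sum_(1 <= i < k) yl e setT us i)%R.
      by apply: eq_bigr.
    rewrite E in hzk; have hzk2 : (0 <= \sum_(1 <= i < k) yl e setT us i)%R := hzk. move: hzk2; set X := (\sum_(1 <= i < k) yl e setT us i)%R; move=> hzk2; clearbody X; lia.
  - rewrite big_geq //; lia.
have [g [[ig rg] eg]] := label esym eirr C.
have gp : forall v, (g v).-1 < #|T|.
  by move=> v; move: (rg v (in_setT v)); rewrite cardsT => /andP[? ?]; lia.
pose f : {ffun T -> 'I_#|T|} := [ffun v => Ordinal (gp v)].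
have fg : forall v, (f v : nat).+1 = g v.
  by move=> v; rewrite ffunE /=; move: (rg v (in_setT v)) => /andP[? ?]; lia.
have fn : is_numbering f.
  apply/injectiveP => x y /(congr1 (fun i : 'I__ => (i : nat).+1)).
  by rewrite !fg => /ig; apply; exact: in_setT.
have fs : strength_of e f <= #|T| + d_G e us.
  apply/bigmax_leqP => u _; apply/bigmax_leqP => v euv; rewrite !fg.
  by apply: eg => //; exact: in_setT.
have str_le : forall f0, is_numbering f0 -> str e <= strength_of e f0.
  move=> f0 h0; rewrite /str; case: ex_minnP => n _ Hmin; apply: Hmin.
  by apply/existsP; exists f0; rewrite h0 eqxx.
have str_ge : #|T| + min_degree e <= str e.
  rewrite /str; case: ex_minnP => n /existsP[f0 /andP[inj /eqP <-]] _.
  have injf : injective f0 := injectiveP _ inj.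
  have htop : #|T|.-1 < #|T| by lia.
  pose top : 'I_#|T| := Ordinal htop.
  have : top \in codom f0 by apply: (inj_card_onto injf); rewrite card_ord.
  move/codomP => [x fx].
  have fxv : (f0 x : nat) = #|T|.-1 by rewrite -fx.
  case: (boolP [exists w, e x w && ((min_degree e).-1 <= f0 w)]).
  - move=> /existsP[w /andP[exw hw]].
    rewrite /strength_of.
    apply: (leq_trans _ (leq_bigmax_cond x isT)).
    apply: (leq_trans _ (leq_bigmax_cond w exw)).
    rewrite fxv; move: hw; case: (f0 w) => a /= _ ha; lia.
  - move=> hno; exfalso.
    pose Nx := [seq (f0 w : nat) | w <- enum [set w in setT | e x w]].
    have uN : uniq Nx.
      rewrite map_inj_uniq ?enum_uniq //.
      by move=> a b /val_inj /injf.
    have sub : {subset Nx <= iota 0 (min_degree e).-1}.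
      move=> t /mapP [w]; rewrite mem_enum inE in_setT /= => exw ->.
      rewrite mem_iota /= add0n.
      move/existsPn: hno => /(_ w); rewrite exw /= -ltnNge; exact.
    have := uniq_leq_size uN sub.
    rewrite size_iota size_map -cardE.
    have := deg x; rewrite /deg_in; lia.
split; first exact: leq_trans (str_le f fn) fs.
move=> hd; apply/eqP; rewrite eqn_leq (leq_trans (str_le f fn) fs) /=.
by rewrite hd.
Qed.
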